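(* Let $I$ be a (finite or infinite) interval of $\mathbb Z$ and $Z=\{(Z^{(t)}_s)_{s\ge t,s\in I}\}_{t\in I}$ a coalescent-walk process on $I$. Define the relation $\le_Z$ on $I$ by: $i\le_Z i$; for $i<j$, $i\le_Z j$ if $Z^{(i)}_j<0$ and $j\le_Z i$ if $Z^{(i)}_j\ge0$. Then $\le_Z$ is a total order on $I$.
   Context: A coalescent-walk process on $I$ is a family $\{(Z^{(t)}_s)_{s\ge t,s\in I}\}_{t\in I}$ of integer-valued walks such that $Z^{(t)}_t=0$ for every $t\in I$, and for $t'\ge t$ in $I$, if $Z^{(t)}_k\ge Z^{(t')}_k$ (resp. $\le$) then $Z^{(t)}_{k'}\ge Z^{(t')}_{k'}$ (resp. $\le$) for every $k'\ge k$. *)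

(* Defs.v *)
From Stdlib Require Import ZArith.
Open Scope Z_scope.

Definition is_interval (I : Z -> Prop) : Prop :=
  forall a b c, I a -> I c -> a <= b -> b <= c -> I b.

(* A coalescent-walk process on I: W t s stands for Z^{(t)}_s; only the values
   with t, s in I and s >= t are meaningful. *)
Definition coalescent_walk_process (I : Z -> Prop) (W : Z -> Z -> Z) : Prop :=
  (forall t, I t -> W t t = 0) /\
  (forall t t' k, I t -> I t' -> I k -> t <= t' -> t' <= k ->
     (W t k >= W t' k -> forall k', I k' -> k <= k' -> W t k' >= W t' k') /\
     (W t k <= W t' k -> forall k', I k' -> k <= k' -> W t k' <= W t' k')).

Definition le_Z (W : Z -> Z -> Z) (i j : Z) : Prop :=
  i = j \/ (i < j /\ W i j < 0) \/ (j < i /\ W j i >= 0).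

Definition total_order_on (I : Z -> Prop) (R : Z -> Z -> Prop) : Prop :=
  (forall i, I i -> R i i) /\
  (forall i j, I i -> I j -> R i j -> R j i -> i = j) /\
  (forall i j k, I i -> I j -> I k -> R i j -> R j k -> R i k) /\
  (forall i j, I i -> I j -> R i j \/ R j i).

(* Main.v *)
Require Import Defs.
From Stdlib Require Import ZArith Lia.
Open Scope Z_scope.

Lemma key (I : Z -> Prop) (W : Z -> Z -> Z) :
  coalescent_walk_process I W -> forall a b c, I a -> I b -> I c ->
  (a < b -> b < c -> (W a b < 0 -> W a c <= W b c) /\ (W a b >= 0 -> W a c >= W b c)).
Proof.
  intros [H0 H1] a b c Ia Ib Ic ab bc.
  destruct (H1 a b b Ia Ib Ib ltac:(lia) ltac:(lia)) as [P Q].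
  rewrite (H0 b Ib) in P, Q.
  split; intros h.
  - apply (Q ltac:(lia) c Ic); lia.
  - apply (P ltac:(lia) c Ic); lia.
Qed.

Theorem proposition2p9 (I : Z -> Prop) (W : Z -> Z -> Z) :
  is_interval I -> coalescent_walk_process I W -> total_order_on I (le_Z W).
Proof.
  intros _ HW. unfold total_order_on, le_Z.
  split; [|split; [|split]].
  - intros; lia.
  - intros; lia.
  - intros i j k Ii Ij Ik A B.
    pose proof (key I W HW i j k Ii Ij Ik).
    pose proof (key I W HW i k j Ii Ik Ij).
    pose proof (key I W HW j i k Ij Ii Ik).
    pose proof (key I W HW j k i Ij Ik Ii).
    pose proof (key I W HW k i j Ik Ii Ij).
    pose proof (key I W HW k j i Ik Ij Ii).
    destruct A as [A|[A|A]]; [subst; tauto| |];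
    (destruct B as [B|[B|B]]; [subst; tauto| |]);
    destruct (Z.lt_total i k) as [C|[C|C]]; try (subst; lia); lia.
  - intros; lia.
Qed.
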